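(* Let $n$ be odd with $n\mid(q+1)$, let $m$ be a positive even integer, $b$ a positive integer with $\gcd(b,n)=1$, and $\delta$ an even integer with $2\le\delta\le\frac{n-m+1}{2}$. Put $$A=\{\alpha^{0}\}\cup\{\alpha^{\pm\frac{n+2j-1}{2}b}: j=1,\dots,\tfrac{m}{2}\},\qquad B=\{\alpha^{jb}:-\tfrac{\delta-2}{2}\le j\le\tfrac{\delta-2}{2}\},$$ and let $d_A^{\perp}$ be the minimum distance of the dual of the cyclic code of length $n$ over $\mathbb{F}_{q^2}$ with complete defining set $A$. Then $C_{AB}$ is a cyclic $(d_A^{\perp}-\delta+1,\delta)$-LRC over $\mathbb{F}_q$ with dimension $n-m-2\delta+3$. If moreover $\delta-2<n-m-d_A^{\perp}$, then $C_{AB}$ is optimal and has minimum distance $m+\delta-1$.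
   Context: Let $q$ be a prime power and $n\mid(q+1)$, so the set $R_n$ of all $n$-th roots of unity lies in $\mathbb{F}_{q^2}$; let $\alpha\in\mathbb{F}_{q^2}$ be a primitive $n$-th root of unity. For $A,B\subseteq R_n$, $AB=\{\beta\gamma:\beta\in A,\gamma\in B\}$. For $Z\subseteq R_n$, the cyclic code of length $n$ over $\mathbb{F}_{q^2}$ with complete defining set $Z$ is the ideal generated by $\prod_{\beta\in Z}(x-\beta)$ in $\mathbb{F}_{q^2}[x]/(x^n-1)$; if $\{j:\alpha^j\in Z\}$ is closed under $j\mapsto-j\bmod n$ (a union of $q$-cyclotomic cosets), $C_Z$ denotes the cyclic code of length $n$ over $\mathbb{F}_q$ generated by this polynomial, which lies in $\mathbb{F}_q[x]$. Locality: for a linear code $C\subseteq\mathbb{F}_q^n$ and integers $r\ge1$, $\delta\ge2$, the $i$-th coordinate has $(r,\delta)$-locality if there is $S_i\subseteq\{1,\dots,n\}$ with $i\in S_i$, $|S_i|\le r+\delta-1$ such that the punctured code $C|_{S_i}$ has minimum distance at least $\delta$; $C$ is an $(r,\delta)$-LRC if every coordinate has $(r,\delta)$-locality. An $[n,k,d]$ $(r,\delta)$-LRC is optimal if $d=n-k-(\lceil k/r\rceil-1)(\delta-1)+1$ (always an upper bound on $d$). *)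

(* Defs.v *)
From HB Require Import structures.
From mathcomp Require Import all_boot all_order all_algebra all_field.
Set Implicit Arguments. Unset Strict Implicit. Unset Printing Implicit Defensive.
Import Order.TTheory GRing.Theory Num.Theory.
Local Open Scope ring_scope.

Definition code (R : Type) (n : nat) := 'rV[R]_n -> Prop.

Definition wt (R : nzRingType) n (c : 'rV[R]_n) : nat := #|[set i | c 0 i != 0]|.
Definition wt_on (R : nzRingType) n (S : {set 'I_n}) (c : 'rV[R]_n) : nat :=
  #|[set i in S | c 0 i != 0]|.

Definition is_min_dist (R : nzRingType) n (C : code R n) (d : nat) : Prop :=
  (exists2 c, C c & c != 0 /\ wt c = d) /\
  (forall c, C c -> c != 0 -> (d <= wt c)%N).

Definition has_dim (K : fieldType) n (C : code K n) (k : nat) : Prop :=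
  exists G : 'M[K]_(k, n), row_free G /\ forall c, C c <-> (c <= G)%MS.

Definition dual (R : nzRingType) n (C : code R n) : code R n :=
  fun v => forall c, C c -> \sum_i v 0 i * c 0 i = 0.

Definition cshift (R : Type) n (c : 'rV[R]_n) : 'rV[R]_n :=
  \row_i c 0 (ord_pred i).
Definition is_cyclic (R : Type) n (C : code R n) : Prop :=
  forall c, C c -> C (cshift c).

(* (r,delta)-locality: for every coordinate i there is S containing i with
   |S| <= r + delta - 1 such that the punctured code C|_S has minimum distance
   >= delta, i.e. every codeword whose restriction to S is nonzero has
   at least delta nonzero entries in S. *)
Definition is_LRC (R : nzRingType) n (C : code R n) (r delta : nat) : Prop :=
  forall i : 'I_n, exists S : {set 'I_n},
    [/\ i \in S, (#|S| <= r + delta - 1)%N &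
        forall c, C c -> wt_on S c != 0%N -> (delta <= wt_on S c)%N].

Definition optimal_LRC_params (n k d r delta : nat) : Prop :=
  (d%:Z = n%:Z - k%:Z - (((k + r - 1) %/ r)%N%:Z - 1) * (delta%:Z - 1) + 1)%R.

Definition gen_poly (L : fieldType) (Z : seq L) : {poly L} :=
  \prod_(beta <- undup Z) ('X - beta%:P).

(* cyclic code of length n over L with complete defining set Z:
   the ideal generated by gen_poly Z in L[x]/(x^n-1), i.e. the words whose
   polynomial (degree < n) is divisible by gen_poly Z *)
Definition cyc_code (L : fieldType) n (Z : seq L) : code L n :=
  fun c => gen_poly Z %| rVpoly c.

Definition cyc_code_sub (K : fieldType) (L : fieldExtType K) n (Z : seq L)
  : code K n :=
  fun c => gen_poly Z %| map_poly (in_alg L) (rVpoly c).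

Definition setmul (L : fieldType) (A B : seq L) : seq L :=
  undup [seq x * y | x <- A, y <- B].

Definition setA (L : fieldType) (alpha : L) (n m b : nat) : seq L :=
  undup (1 :: [seq alpha ^ ((((n + 2 * j - 1) %/ 2) * b)%N%:Z) | j <- iota 1 m./2]
           ++ [seq alpha ^ (- (((n + 2 * j - 1) %/ 2) * b)%N%:Z) | j <- iota 1 m./2]).

Definition setB (L : fieldType) (alpha : L) (b delta : nat) : seq L :=
  let h := ((delta - 2) %/ 2)%N in
  undup [seq alpha ^ ((i%:Z - h%:Z) * b%:Z) | i <- iota 0 (2 * h + 1)].

Arguments cyc_code {L} n Z.
Arguments cyc_code_sub {K L} n Z.

(* Main.v *)
Require Import Defs.
From HB Require Import structures.
From mathcomp Require Import all_boot all_order all_algebra all_field.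
From mathcomp Require Import zify ring.
Set Implicit Arguments. Unset Strict Implicit. Unset Printing Implicit Defensive.
Import Order.TTheory GRing.Theory Num.Theory.
Local Open Scope ring_scope.

Lemma gen_poly_dvd (L : fieldType) (Z : seq L) (p : {poly L}) :
  (gen_poly Z %| p) = all (root p) Z.
Proof.
apply/idP/allP.
  move=> H z Hz; apply: root_dvdp H _.
  by rewrite /gen_poly root_prod_XsubC mem_undup.
move=> H; rewrite /gen_poly; apply: uniq_roots_dvdp; last by rewrite uniq_rootsE undup_uniq.
by apply/allP=> z; rewrite mem_undup; apply: H.
Qed.

Lemma horner_rV (L : fieldType) n (c : 'rV[L]_n) x :
  (rVpoly c).[x] = \sum_(i < n) c 0 i * x ^+ i.
Proof. by rewrite /rVpoly horner_poly; apply: eq_bigr => i _; rewrite valK. Qed.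

Lemma cyc_codeP (L : fieldType) n (Z : seq L) (c : 'rV[L]_n) :
  cyc_code n Z c <-> (forall z, z \in Z -> \sum_(i < n) c 0 i * z ^+ i = 0).
Proof.
rewrite /cyc_code gen_poly_dvd; split.
  by move/allP=> H z /H; rewrite rootE horner_rV => /eqP.
by move=> H; apply/allP => z /H; rewrite rootE horner_rV => ->.
Qed.

Lemma cshift_eval (L : fieldType) n (c : 'rV[L]_n) (z : L) : z ^+ n = 1 ->
  \sum_(i < n) cshift c 0 i * z ^+ i = z * \sum_(i < n) c 0 i * z ^+ i.
Proof.
move=> zn; rewrite (reindex_inj (can_inj (@ordSK n))) mulr_sumr.
apply: eq_bigr => u _; rewrite mxE ordSK /= expr_mod // exprS.
by rewrite mulrCA.
Qed.

Definition crot n (k : nat) (u : 'I_n) : 'I_n :=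
  Ordinal (ltn_pmod (u + k) (leq_ltn_trans (leq0n u) (ltn_ord u))).

Lemma crot_inj n k : injective (@crot n k).
Proof.
move=> u v /(congr1 val) /= /eqP; rewrite eqn_modDr !modn_small //.
by move/eqP/val_inj.
Qed.

Lemma crot_exp (L : fieldType) n k (u : 'I_n) (z : L) : z ^+ n = 1 ->
  z ^+ (crot k u) = z ^+ u * z ^+ k.
Proof. by move=> zn; rewrite /= expr_mod // exprD. Qed.

Lemma dual_orth (L : fieldType) n (A B : seq L) (v c : 'rV[L]_n) : (0 < n)%N ->
  (forall z, z \in A -> z ^+ n = 1) -> (forall z, z \in B -> z ^+ n = 1) ->
  dual (cyc_code n A) v ->
  (forall a b, a \in A -> b \in B -> \sum_(i < n) c 0 i * (b * a) ^+ i = 0) ->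
  forall b k, b \in B -> \sum_(u < n) v 0 u * c 0 (crot k u) * b ^+ u = 0.
Proof.
move=> n0 An Bn Hv Hc b k Bb.
have nz : forall z : L, z ^+ n = 1 -> z != 0.
  move=> z zn; apply/negP => /eqP z0; move: zn; rewrite z0 expr0n.
  by rewrite eqn0Ngt n0 /= => /eqP; rewrite eq_sym oner_eq0.
pose w : 'rV[L]_n := \row_u (c 0 (crot k u) * b ^+ (crot k u)).
have Hw : cyc_code n A w.
  apply/cyc_codeP => a Aa.
  have : a ^+ k * \sum_(i < n) w 0 i * a ^+ i = 0.
    apply: (etrans _ (Hc a b Aa Bb)).
    rewrite mulr_sumr [RHS](reindex_inj (@crot_inj n k)).
    apply: eq_bigr => u _; rewrite mxE exprMn (crot_exp _ _ (An a Aa)).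
    by rewrite mulrCA -mulrA [_ * a ^+ k]mulrC.
  move/eqP; rewrite mulf_eq0 expf_eq0 (negbTE (nz a (An a Aa))) andbF /=.
  by move/eqP.
have := Hv w Hw.
have -> : \sum_(i < n) v 0 i * w 0 i = b ^+ k * \sum_(u < n) v 0 u * c 0 (crot k u) * b ^+ u.
  rewrite mulr_sumr; apply: eq_bigr => u _; rewrite mxE (crot_exp _ _ (Bn b Bb)).
  ring.
move/eqP; rewrite mulf_eq0 expf_eq0 (negbTE (nz b (Bn b Bb))) andbF /=.
by move/eqP.
Qed.
Lemma bch (L : fieldType) n (g : L) (x : 'rV[L]_n) (s D : nat) :
  n.-primitive_root g ->
  (forall j, (j < D)%N -> \sum_(i < n) x 0 i * (g ^+ (s + j)) ^+ i = 0) ->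
  x != 0 -> (D < wt x)%N.
Proof.
move=> pg Hr xn0; rewrite ltnNge; apply/negP => HwD.
pose T := [set i | x 0 i != 0].
have [i0 Hi0] : exists i0, i0 \in T.
  apply/existsP; move: xn0; apply: contraR; rewrite negb_exists => /forallP H.
  apply/eqP/rowP => i; rewrite mxE; have := H i; rewrite inE; by case: eqP.
pose w := #|T|.
pose f : 'I_w -> 'I_n := fun t => enum_val t.
pose a : 'rV[L]_w := \row_t g ^+ (f t).
pose y : 'cV[L]_w := \col_t (x 0 (f t) * g ^+ (s * f t)).
pose V := Vandermonde w a.
have Vy : V *m y = 0.
  apply/colP => j; rewrite !mxE.
  have jD : (j < D)%N by apply: leq_trans HwD; rewrite /wt -/T.
  apply: (etrans _ (Hr j jD)); apply/esym.
  have E1 : \sum_(i < n) x 0 i * (g ^+ (s + j)) ^+ i =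
            \sum_(i in T) x 0 i * (g ^+ (s + j)) ^+ i.
    rewrite [LHS](bigID (mem T)) /= [X in _ + X]big1 ?addr0 //.
    by move=> i; rewrite inE negbK => /eqP ->; rewrite mul0r.
  rewrite E1 big_enum_val; apply: eq_bigr => t _; rewrite !mxE -/(f t).
  rewrite -!exprM mulnDl exprD [(f t * j)%N]mulnC exprM.
  by rewrite mulrA [RHS]mulrC.
have detV : \det V != 0.
  rewrite det_Vandermonde; apply/prodf_neq0 => i _; apply/prodf_neq0 => j ij.
  rewrite !mxE subr_eq0 (eq_prim_root_expr pg) !modn_small //.
  apply/negP => /eqP /val_inj /enum_val_inj E; by rewrite E ltnn in ij.
have y0 : y = 0.
  have Vu : V \in unitmx by rewrite unitmxE unitfE.
  by rewrite -(mulKmx Vu y) Vy mulmx0.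
have := congr1 (fun M : 'cV_w => M (enum_rank_in Hi0 i0) 0) y0.
rewrite !mxE /f (enum_rankK_in Hi0 Hi0) => /eqP; rewrite mulf_eq0 expf_eq0.
have nz : (n == 0%N) = false.
  by apply/negbTE; rewrite -lt0n; apply: (leq_ltn_trans _ (ltn_ord i0)).
rewrite (prim_root_eq0 pg) nz andbF orbF; move: Hi0; rewrite inE => /negbTE ->.
done.
Qed.

Lemma rVpoly_sum (F : fieldType) n (c : 'rV[F]_n) :
  rVpoly c = \sum_(i < n) c 0 i *: 'X^i.
Proof.
rewrite /rVpoly poly_def.
by apply: eq_bigr => i _; rewrite valK.
Qed.

Lemma dim_dvd (F : fieldType) n (g0 : {poly F}) d :
  g0 != 0 -> size g0 = d.+1 -> (d <= n)%N ->
  has_dim (fun c : 'rV[F]_n => g0 %| rVpoly c) (n - d).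
Proof.
move=> g0n sg dn.
pose M : 'M[F]_(n, d) := \matrix_(i, j) ('X^i %% g0)`_j.
have HM : forall c : 'rV_n, (c *m M == 0) = (g0 %| rVpoly c).
  move=> c; rewrite /dvdp.
  have E : forall j : 'I_d, (c *m M) 0 j = (rVpoly c %% g0)`_j.
    move=> j; rewrite !mxE rVpoly_sum.
    have -> : (\sum_(i < n) c 0 i *: 'X^i) %% g0 = \sum_(i < n) c 0 i *: ('X^i %% g0).
      elim/big_rec2: _ => [|i y p _ IH]; first by rewrite mod0p.
      by rewrite modpD modpZl IH.
    rewrite coef_sum; apply: eq_bigr => i _; by rewrite coefZ mxE.
  apply/eqP/eqP => [H|H].
    apply/polyP => k; rewrite coef0.
    case: (ltnP k d) => kd.
      by rewrite -(E (Ordinal kd)) H mxE.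
    apply: nth_default; have := ltn_modp (rVpoly c) g0; rewrite g0n sg ltnS => H1.
    exact: leq_trans H1 kd.
  by apply/rowP => j; rewrite E H coef0 mxE.
have rM : \rank M = d.
  apply/eqP; change (row_full M); apply/row_fullP.
  exists (\matrix_(j, i) ((val i == val j)%:R : F)).
  apply/matrixP => j j'; rewrite !mxE.
  have jn : (j < n)%N by apply: leq_trans (ltn_ord j) dn.
  rewrite (bigD1 (Ordinal jn)) //= big1 ?addr0; last first.
    by move=> i /negbTE; rewrite !mxE -val_eqE /= => ->; rewrite mul0r.
  rewrite !mxE eqxx mul1r modp_small; last by rewrite size_polyXn sg ltnS /=.
  by rewrite coefXn eq_sym.
have rK : \rank (kermx M) = (n - d)%N by rewrite mxrank_ker rM.
rewrite /has_dim -rK.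
exists (row_base (kermx M)); split; first exact: row_base_free.
move=> c; rewrite eq_row_base sub_kermx HM; split; by move=> ->.
Qed.

Lemma exprz_shift (L : fieldType) (g : L) n k t (e : int) :
  g ^+ n = 1 -> g != 0 -> e = k%:Z - (t * n)%N%:Z -> g ^ e = g ^+ k.
Proof.
move=> gn g0 ->; rewrite expfzDr // -exprnP -exprnN mulnC exprM gn expr1n.
by rewrite invr1 mulr1.
Qed.

Section Sets.
Variables (L : fieldType) (alpha : L) (n m b delta N M h : nat).
Hypotheses (Hn : n = (2 * N + 1)%N) (Hm : m = (2 * M)%N) (Hd : delta = (2 * h + 2)%N)
  (Hineq : (2 * h + M + 1 <= N)%N) (HM : (0 < M)%N) (pa : n.-primitive_root alpha) (cop : coprime b n).
Local Notation g := (alpha ^+ b).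

Lemma an1 : alpha ^+ n = 1. Proof. exact: prim_expr_order. Qed.
Lemma a0 : alpha != 0.
Proof. by rewrite (prim_root_eq0 pa) Hn addn1. Qed.

Lemma memA z : z \in setA alpha n m b <->
  z = 1 \/ exists2 j, (1 <= j <= M)%N & (z = g ^+ (N + j) \/ z = g ^+ (N + 1 - j)).
Proof.
have Hm2 : m./2 = M by rewrite Hm mul2n doubleK.
have Hdiv : forall j, ((n + 2 * j - 1) %/ 2 = N + j)%N.
  move=> j; rewrite Hn (_ : (2 * N + 1 + 2 * j - 1 = (N + j) * 2)%N); last by lia.
  by rewrite mulnK.
have hpos : forall j, alpha ^ (((n + 2 * j - 1) %/ 2 * b)%N) = g ^+ (N + j).
  by move=> j; rewrite Hdiv -exprnP -exprM mulnC.
have hneg : forall j, (j <= N + 1)%N ->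
    alpha ^ (- (((n + 2 * j - 1) %/ 2 * b)%N)%:Z) = g ^+ (N + 1 - j).
  move=> j jN; rewrite Hdiv -exprM [(_ * b)%N]mulnC; apply: (exprz_shift (t := b) an1 a0).
  have E : ((b * (N + 1 - j)) + (b * (N + j)) = b * n)%N.
    by rewrite -mulnDr Hn; congr (_ * _)%N; lia.
  rewrite -E PoszD [(b * (N + j))%N]mulnC; lia.
rewrite /setA mem_undup in_cons mem_cat Hm2.
split.
  case/orP => [/eqP ->|/orP [] /mapP [j]]; [by left| |]; rewrite mem_iota => jM ->; right;
    exists j; try lia.
    by left; rewrite hpos.
  by right; rewrite hneg //; lia.
case=> [->|[j jM [->|->]]]; first by rewrite eqxx.
  apply/orP; right; apply/orP; left; apply/mapP; exists j; first by rewrite mem_iota; lia.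
  by rewrite hpos.
apply/orP; right; apply/orP; right; apply/mapP; exists j; first by rewrite mem_iota; lia.
by rewrite hneg //; lia.
Qed.

Lemma memB z : z \in setB alpha b delta <->
  exists2 i, (i <= 2 * h)%N & z = g ^+ (i + n - h).
Proof.
have Hh : ((delta - 2) %/ 2 = h)%N.
  by rewrite Hd (_ : (2 * h + 2 - 2 = h * 2)%N) ?mulnK //; lia.
have hB : forall i, alpha ^ ((i%:Z - h%:Z) * b%:Z) = g ^+ (i + n - h).
  move=> i; rewrite -exprM; apply: (exprz_shift (t := b) an1 a0).
  have E : ((b * (i + n - h)) = b * i + b * n - b * h)%N.
    rewrite -mulnDr -mulnBr; congr (_ * _)%N; lia.
  have E2 : (b * h <= b * i + b * n)%N.
    rewrite -mulnDr leq_mul2l; apply/orP; right; lia.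
  rewrite E -(subzn E2) PoszD !PoszM; ring.
rewrite /setB Hh mem_undup; split.
  case/mapP => i; rewrite mem_iota => iH ->; exists i; first by lia.
  exact: hB.
case=> i ih ->; apply/mapP; exists i; first by rewrite mem_iota; lia.
by rewrite hB.
Qed.

Definition Elist := (iota 0 (h + 1) ++ iota (N + 1 - M - h) (2 * M + 2 * h) ++ iota (n - h) h)%N.

Lemma gn1 : g ^+ n = 1. Proof. by rewrite exprAC an1 expr1n. Qed.

Lemma gshift s e : e = (s + n)%N -> g ^+ e = g ^+ s.
Proof. by move=> ->; rewrite exprD gn1 mulr1. Qed.

Lemma memAB z : z \in setmul (setA alpha n m b) (setB alpha b delta) <->
  exists2 s, s \in Elist & z = g ^+ s.
Proof.
rewrite /setmul mem_undup /Elist; split.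
  case/allpairsP => [[x y] /= [/memA Hx /memB [i ih ->] ->]].
  case: Hx => [->|[j jM [->|->]]]; rewrite ?mul1r -?exprD.
  - case: (leqP h i) => hi.
      exists (i - h)%N; first by rewrite !mem_cat !mem_iota; lia.
      by apply: gshift; lia.
    exists (i + n - h)%N; last by []. by rewrite !mem_cat !mem_iota; lia.
  - exists (N + j + i - h)%N; first by rewrite !mem_cat !mem_iota; lia.
    by apply: gshift; lia.
  - exists (N + 1 - j + i - h)%N; first by rewrite !mem_cat !mem_iota; lia.
    by apply: gshift; lia.
case=> s; rewrite !mem_cat !mem_iota => Hs ->; apply/allpairsP.
have [s1|s1] := leqP s h.
  exists (1, g ^+ ((s + h) + n - h)); split => /=; first by apply/memA; left.
    by apply/memB; exists (s + h)%N => //; lia.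
  by rewrite mul1r; apply/esym/gshift; lia.
have [s2|s2] := leqP (n - h) s.
  exists (1, g ^+ ((s + h - n) + n - h)); split => /=; first by apply/memA; left.
    by apply/memB; exists (s + h - n)%N => //; lia.
  by rewrite mul1r; congr (_ ^+ _); lia.
have [s3|s3] := leqP (N + 1 - h) s.
  have [s4|s4] := leqP (s - N) h.
    exists (g ^+ (N + 1), g ^+ ((s + h - N - 1) + n - h)); split => /=.
    - by apply/memA; right; exists 1%N; [lia| left].
    - by apply/memB; exists (s + h - N - 1)%N => //; lia.
    by rewrite -exprD; apply/esym/gshift; lia.
  exists (g ^+ (N + (s - N - h)), g ^+ ((2 * h) + n - h)); split => /=.
  - by apply/memA; right; exists (s - N - h)%N; [lia| left].
  - by apply/memB; exists (2 * h)%N.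
  by rewrite -exprD; apply/esym/gshift; lia.
exists (g ^+ (N + 1 - (N + 1 - h - s)), g ^+ (0 + n - h)); split => /=.
- by apply/memA; right; exists (N + 1 - h - s)%N; [lia| right].
- by apply/memB; exists 0%N => //; lia.
by rewrite -exprD; apply/esym/gshift; lia.
Qed.

Lemma pg : n.-primitive_root g.
Proof. by rewrite prim_root_exp_coprime. Qed.

Lemma Elist_lt s : s \in Elist -> (s < n)%N.
Proof. by rewrite /Elist !mem_cat !mem_iota; lia. Qed.

Lemma Elist_uniq : uniq Elist.
Proof.
rewrite /Elist !cat_uniq !iota_uniq /= !andbT; apply/andP; split.
  apply/hasPn => x; rewrite mem_cat !mem_iota => H /=; lia.
apply/hasPn => x; rewrite !mem_iota => H /=; lia.
Qed.

Lemma size_Elist : size Elist = (m + 2 * delta - 3)%N.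
Proof. by rewrite /Elist !size_cat !size_iota; lia. Qed.

Lemma g_inj s t : (s < n)%N -> (t < n)%N -> g ^+ s = g ^+ t -> s = t.
Proof.
by move=> sn tn /eqP; rewrite (eq_prim_root_expr pg) !modn_small // => /eqP.
Qed.

Lemma AB_uniq : uniq (setmul (setA alpha n m b) (setB alpha b delta)).
Proof. exact: undup_uniq. Qed.

Lemma AB_perm : perm_eq (setmul (setA alpha n m b) (setB alpha b delta)) (map (fun s => g ^+ s) Elist).
Proof.
apply: uniq_perm; first exact: AB_uniq.
  rewrite map_inj_in_uniq ?Elist_uniq // => s t Hs Ht; apply: g_inj; exact: Elist_lt.
move=> z; apply/idP/idP.
  by case/memAB => s Hs ->; apply: map_f.
by case/mapP => s Hs ->; apply/memAB; exists s.
Qed.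

Lemma size_AB : size (setmul (setA alpha n m b) (setB alpha b delta)) = (m + 2 * delta - 3)%N.
Proof. by rewrite (perm_size AB_perm) size_map size_Elist. Qed.

Lemma AB_root z : z \in setmul (setA alpha n m b) (setB alpha b delta) -> z ^+ n = 1.
Proof. by case/memAB => s _ ->; rewrite exprAC gn1 expr1n. Qed.

Lemma A_root z : z \in setA alpha n m b -> z ^+ n = 1.
Proof. by case/memA => [->|[j _ [->|->]]]; rewrite ?expr1n // exprAC gn1 expr1n. Qed.

Lemma B_root z : z \in setB alpha b delta -> z ^+ n = 1.
Proof. by case/memB => i _ ->; rewrite exprAC gn1 expr1n. Qed.

Lemma AB_inv z : z \in setmul (setA alpha n m b) (setB alpha b delta) ->
  z^-1 \in setmul (setA alpha n m b) (setB alpha b delta).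
Proof.
case/memAB => s Hs ->; apply/memAB.
have g0 : g != 0 by rewrite (prim_root_eq0 pg) Hn addn1.
have inv : forall t, (s + t = n)%N -> (g ^+ s)^-1 = g ^+ t.
  move=> t st; apply: (mulfI (expf_neq0 s g0)); rewrite divff; last exact: expf_neq0.
  by rewrite -exprD st gn1.
move: Hs; rewrite /Elist !mem_cat !mem_iota => Hs.
have [s0|s0] := posnP s.
  exists 0%N; first by rewrite /Elist !mem_cat !mem_iota; lia.
  by rewrite s0 expr0 invr1.
exists (n - s)%N; first by rewrite /Elist !mem_cat !mem_iota; lia.
by apply: inv; lia.
Qed.

Lemma AB_mid j : (j < 2 * M + 2 * h)%N ->
  g ^+ (N + 1 - M - h + j) \in setmul (setA alpha n m b) (setB alpha b delta).
Proof.
move=> jl; apply/memAB; exists (N + 1 - M - h + j)%N => //.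
by rewrite /Elist !mem_cat !mem_iota; lia.
Qed.

Lemma A_shift a s : a \in setA alpha n m b -> (1 <= s <= N - M)%N ->
  exists e, [/\ (0 < e)%N, (e < n)%N & g ^+ s * a = g ^+ e].
Proof.
move=> Aa sH; case/memA: Aa => [->|[j jM [->|->]]].
- by exists s; rewrite mulr1; split => //; lia.
- by exists (s + (N + j))%N; rewrite -exprD; split => //; lia.
- by exists (s + (N + 1 - j))%N; rewrite -exprD; split => //; lia.
Qed.

End Sets.

Definition frobq (L : fieldType) (q : nat) (H : [pchar L].-nat q) (x : L) : L := x ^+ q.

Lemma frobq_nmod (L : fieldType) (q : nat) (H : [pchar L].-nat q) :
  nmod_morphism (frobq H).
Proof.
split; rewrite /frobq; last by move=> x y; rewrite exprDn_pchar.
by case/andP: H => q0 _; rewrite expr0n; case: q q0.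
Qed.

Lemma frobq_monoid (L : fieldType) (q : nat) (H : [pchar L].-nat q) :
  monoid_morphism (frobq H).
Proof. by split; rewrite /frobq ?expr1n // => x y; rewrite exprMn. Qed.

HB.instance Definition _ (L : fieldType) (q : nat) (H : [pchar L].-nat q) :=
  GRing.isNmodMorphism.Build L L (frobq H) (frobq_nmod H).
HB.instance Definition _ (L : fieldType) (q : nat) (H : [pchar L].-nat q) :=
  GRing.isMonoidMorphism.Build L L (frobq H) (frobq_monoid H).

Lemma pchar_card (K : finFieldType) (L : fieldExtType K) : [pchar L].-nat #|K|.
Proof.
have [p pr pK] := finPcharP K.
have := card_pprimeChar pK => /= ->.
rewrite pnatX pnatE // (pchar_lalg L) pK //.
Qed.

Lemma frob_fixed (K : finFieldType) (L : fieldExtType K) (c : L) :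
  c ^+ #|K| = c -> exists y : K, in_alg L y = c.
Proof.
move=> cq; case: (boolP [exists y : K, in_alg L y == c]).
  by case/existsP => y /eqP; exists y.
rewrite negb_exists => /forallP Hn; exfalso.
pose rs := c :: map (in_alg L) (enum K).
pose P : {poly L} := 'X^#|K| - 'X.
have q1 := finNzRing_gt1 K.
have sP : size P = #|K|.+1.
  by rewrite /P size_polyDl size_polyXn // size_polyN size_polyX.
have P0 : P != 0 by rewrite -size_poly_eq0 sP.
have rP : all (root P) rs.
  apply/allP => x; rewrite in_cons => /orP [/eqP ->|/mapP [y _ ->]];
    rewrite rootE /P !hornerE ?cq ?subrr //.
  by rewrite -rmorphXn expf_card subrr.
have urs : uniq rs.
  rewrite /= map_inj_uniq ?enum_uniq ?andbT; last exact: fmorph_inj.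
  by apply/mapP => [[y _ /esym /eqP]]; rewrite (negbTE (Hn y)).
have := max_poly_roots P0 rP urs.
by rewrite sP /= size_map -cardE ltnn.
Qed.

Lemma map_rV (K L : nzRingType) (f : {rmorphism K -> L}) n (c : 'rV[K]_n) :
  map_poly f (rVpoly c) = rVpoly (map_mx f c).
Proof.
apply/polyP => i; rewrite coef_map !coef_rVpoly.
by case: insubP => [j _ _|_] /=; rewrite ?mxE ?rmorph0.
Qed.

Lemma geom0 (L : fieldType) n (u : L) : u ^+ n = 1 -> u != 1 ->
  \sum_(i < n) u ^+ i = 0.
Proof.
move=> un u1; have := subrX1 u n; rewrite un subrr => /esym/eqP.
by rewrite mulf_eq0 subr_eq0 (negbTE u1) /= => /eqP.
Qed.

Lemma sub_card (T : finType) (A : {set T}) k : (k <= #|A|)%N ->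
  exists B : {set T}, B \subset A /\ #|B| = k.
Proof.
move=> kA; exists [set x in take k (enum A)]; split.
  by apply/subsetP => x; rewrite inE => /mem_take; rewrite mem_enum.
rewrite cardsE (card_uniqP _) ?take_uniq ?enum_uniq // size_take -cardE.
by case: ltngtP kA => // ->.
Qed.

Lemma ker_nz (F : fieldType) k p (G : 'M[F]_(k, p)) : (p < k)%N ->
  exists x : 'rV[F]_k, x != 0 /\ x *m G = 0.
Proof.
move=> pk.
have : kermx G != 0.
  rewrite -mxrank_eq0 mxrank_ker; have := rank_leq_col G; lia.
case: (boolP [exists j, row j (kermx G) != 0]).
  case/existsP => j Hj _; exists (row j (kermx G)); split => //.
  by rewrite -row_mul mulmx_ker row0.
rewrite negb_exists => /forallP H /negP []; apply/eqP/row_matrixP => j.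
by have := H j; rewrite negbK row0 => /eqP.
Qed.

Ltac slia :=
  repeat match goal with H : ?T |- _ =>
    lazymatch T with
    | is_true (leq _ _) => fail
    | @eq nat _ _ => fail
    | nat => fail
    | _ => clear H
    end end; lia.

Theorem corollary5p3 (K : finFieldType) (L : fieldExtType K)
  (n m b delta dA : nat) (alpha : L) :
  \dim {:L} = 2%N ->
  odd n -> (n %| #|K| + 1)%N ->
  n.-primitive_root alpha ->
  (0 < m)%N -> ~~ odd m ->
  (0 < b)%N -> coprime b n ->
  ~~ odd delta -> (2 <= delta)%N -> (2 * delta + m <= n + 1)%N ->
  is_min_dist (dual (cyc_code n (setA alpha n m b))) dA ->
  let C := cyc_code_sub n (setmul (setA alpha n m b) (setB alpha b delta)) in
  [/\ is_cyclic C, is_LRC C (dA + 1 - delta) delta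
    & has_dim C (n + 3 - m - 2 * delta)] /\
  ((delta%:Z - 2 < n%:Z - m%:Z - dA%:Z) ->
     is_min_dist C (m + delta - 1) /\
     optimal_LRC_params n (n + 3 - m - 2 * delta) (m + delta - 1)
                        (dA + 1 - delta) delta).
Proof.
move=> _ on nq pa m0 em b0 cop ed d2 ineq [[v0 Dv0 [v0n wv0]] dAmin] C.
pose N := n./2; pose M := m./2; pose h := (delta./2).-1.
have Hn : n = (2 * N + 1)%N.
  by rewrite -{1}(odd_double_half n) on /N -mul2n addnC.
have Hm : m = (2 * M)%N.
  by rewrite -{1}(odd_double_half m) (negbTE em) /M -mul2n.
have Hd : delta = (2 * h + 2)%N.
  rewrite -{1}(odd_double_half delta) (negbTE ed) /h -mul2n /=.
  have : (0 < delta./2)%N by rewrite -(odd_double_half delta) (negbTE ed) in d2; slia.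
  case: (delta./2) => // k _ /=; slia.
have Hineq : (2 * h + M + 1 <= N)%N by slia.
have HM : (0 < M)%N by slia.
have n0 : (0 < n)%N by slia.
set A := setA alpha n m b; set B := setB alpha b delta.
set AB := setmul A B.
pose g := alpha ^+ b.
have mA := memA Hn Hm Hd Hineq HM pa cop.
have mB := memB Hn Hm Hd Hineq HM pa cop.
have mAB := memAB Hn Hm Hd Hineq HM pa cop.
have pgg : n.-primitive_root g := pg pa cop.
have rAB := AB_root Hn Hm Hd Hineq HM pa cop.
have rA := A_root Hn Hm Hd Hineq HM pa cop.
have rB := B_root Hn Hm Hd Hineq HM pa cop.
have uAB : uniq AB := AB_uniq alpha n m b delta.
have sAB : size AB = (m + 2 * delta - 3)%N := size_AB Hn Hm Hd Hineq HM pa cop.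
have nz : forall z : L, z ^+ n = 1 -> z != 0.
  move=> z zn; apply/negP => /eqP z0; move: zn; rewrite z0 expr0n.
  by rewrite eqn0Ngt n0 /= => /eqP; rewrite eq_sym oner_eq0.
have CL : forall c : 'rV[K]_n, C c <->
    (forall z, z \in AB -> \sum_(i < n) in_alg L (c 0 i) * z ^+ i = 0).
  move=> c; rewrite /C /cyc_code_sub map_rV.
  have := cyc_codeP AB (map_mx (in_alg L) c); rewrite /cyc_code => ->.
  have E : forall z : L, \sum_(i < n) map_mx (in_alg L) c 0 i * z ^+ i =
                         \sum_(i < n) in_alg L (c 0 i) * z ^+ i.
    by move=> z; apply: eq_bigr => i _; rewrite mxE.
  by split => H z Hz; [rewrite -E | rewrite E]; apply: H.
have cyc : is_cyclic C.
  move=> c /CL Hc; apply/CL => z Hz.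
  pose c' := map_mx (in_alg L) c.
  transitivity (\sum_(i < n) cshift c' 0 i * z ^+ i).
    by apply: eq_bigr => i _; rewrite !mxE.
  rewrite cshift_eval ?rAB //.
  have -> : \sum_(i < n) c' 0 i * z ^+ i = 0.
    by apply: (etrans _ (Hc z Hz)); apply: eq_bigr => i _; rewrite mxE.
  by rewrite mulr0.
have q0 : [pchar L].-nat #|K| := pchar_card L.
pose fr := frobq q0.
have frz : forall z, z \in AB -> fr z = z^-1.
  move=> z Hz; have z0 := nz z (rAB z Hz).
  have E : fr z * z = 1.
    rewrite /fr /frobq -exprSr -addn1 -(divnK nq) mulnC exprM (rAB z Hz).
    by rewrite expr1n.
  by rewrite -[z^-1]mul1r -E mulfK.
have perm : perm_eq (map fr AB) AB.
  apply: uniq_perm => //.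
    rewrite map_inj_in_uniq // => x y Hx Hy; rewrite !frz //; exact: invr_inj.
  move=> w; apply/mapP/idP.
    case=> z Hz ->; rewrite frz //; exact: (AB_inv Hn Hm Hd Hineq HM pa cop).
  move=> Hw; exists w^-1; first exact: (AB_inv Hn Hm Hd Hineq HM pa cop).
  by rewrite frz ?invrK //; exact: (AB_inv Hn Hm Hd Hineq HM pa cop).
pose gp := \prod_(z <- AB) ('X - z%:P).
have gpE : gen_poly AB = gp by rewrite /gen_poly undup_id.
have fixg : map_poly fr gp = gp.
  rewrite /gp rmorph_prod (eq_bigr (fun z => 'X - (fr z)%:P)); last by move=> z _; rewrite /= map_polyXsubC.
  rewrite -(big_map fr xpredT (fun w => 'X - w%:P)).
  exact: perm_big.
have fixc : forall i, gp`_i ^+ #|K| = gp`_i.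
  by move=> i; have := congr1 (fun p : {poly L} => p`_i) fixg; rewrite /= coef_map.
pose g0 : {poly K} := \poly_(i < size gp) (odflt 0 [pick y : K | in_alg L y == gp`_i]).
have g0E : map_poly (in_alg L) g0 = gp.
  apply/polyP => i; rewrite coef_map coef_poly; case: ltnP => il.
    case: pickP => [y /eqP Hy| H]; first exact: Hy.
    exfalso.
    have [y Hy] := frob_fixed (fixc i).
    by have := H y; rewrite Hy eqxx.
  by rewrite nth_default /= ?scale0r //; rewrite ?raddf0 ?rmorph0.
have sgp : size gp = (m + 2 * delta - 3).+1 by rewrite size_prod_XsubC sAB.
have sg0 : size g0 = (m + 2 * delta - 3).+1 by rewrite -sgp -g0E size_map_poly.
have g00 : g0 != 0 by rewrite -size_poly_eq0 sg0.
have Cg0 : forall c, C c <-> g0 %| rVpoly c.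
  by move=> c; rewrite /C /cyc_code_sub gpE -g0E dvdp_map.
have hdim : has_dim C (n + 3 - m - 2 * delta).
  have := dim_dvd (n := n) g00 sg0; rewrite (_ : (n - _ = n + 3 - m - 2 * delta)%N); last by slia.
  case; first by slia.
  move=> G [fG HG]; exists G; split => // c; rewrite Cg0; exact: HG.
have gn : g ^+ n = 1 by apply: prim_expr_order.
have dual_lb : forall v, dual (cyc_code n A) v -> v != 0 -> (N - M < wt v)%N.
  move=> v Dv vn; apply: (bch (s := 1%N) pgg) => // j jl.
  pose w : 'rV[L]_n := \row_i (g ^+ (1 + j)) ^+ i.
  have Hw : cyc_code n A w.
    apply/cyc_codeP => a Aa.
    have sj : (1 <= 1 + j <= N - M)%N by slia.
    have [e [e0 en Ee]] := A_shift Hn Hm Hd Hineq HM pa cop Aa sj.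
    transitivity (\sum_(i < n) (g ^+ (1 + j) * a) ^+ i).
      by apply: eq_bigr => i _; rewrite mxE exprMn.
    rewrite Ee; apply: geom0; first by rewrite exprAC gn expr1n.
    rewrite -(expr0 g) (eq_prim_root_expr pgg) !modn_small //; slia.
  by apply: (etrans _ (Dv w Hw)); apply: eq_bigr => i _; rewrite mxE.
have dAlb : (N - M < dA)%N by rewrite -wv0; apply: dual_lb.
have ABab : forall a b', a \in A -> b' \in B -> b' * a \in AB.
  by move=> a b' Aa Bb; rewrite /AB /setmul mem_undup mulrC; apply: allpairs_f.
have [t0 Ht0] : exists t0, v0 0 t0 != 0.
  apply/existsP; move: v0n; apply: contraR; rewrite negb_exists => /forallP H.
  apply/eqP/rowP => i; rewrite mxE; have := H i; by case: eqP.
have loc : forall i : 'I_n, exists S : {set 'I_n},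
    [/\ i \in S, #|S| = dA &
        forall c, C c -> wt_on S c != 0%N -> (delta <= wt_on S c)%N].
  move=> i; pose k := (i + n - t0)%N.
  exists (crot k @: [set u | v0 0 u != 0]); split.
  - apply/imsetP; exists t0; rewrite ?inE //; apply/val_inj => /=.
    rewrite /k (_ : (t0 + (i + n - t0) = i + n)%N); last by have := ltn_ord t0; slia.
    by rewrite modnDr modn_small.
  - by rewrite card_imset; [rewrite -wv0 | exact: crot_inj].
  move=> c Cc Hw.
  pose x : 'rV[L]_n := \row_u (v0 0 u * in_alg L (c 0 (crot k u))).
  have Hx : wt x = wt_on (crot k @: [set u | v0 0 u != 0]) c.
    rewrite /wt /wt_on.
    have -> : [set t in crot k @: [set u | v0 0 u != 0] | c 0 t != 0] =
              crot k @: [set u | x 0 u != 0].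
      apply/setP => t; rewrite !inE; apply/andP/imsetP.
        case=> /imsetP [u Hu ->] ct; exists u => //.
        by rewrite inE mxE mulf_eq0 negb_or fmorph_eq0 ct; rewrite inE in Hu; rewrite Hu.
      case=> u; rewrite inE mxE mulf_eq0 negb_or fmorph_eq0 => /andP [H1 H2] ->.
      by split => //; apply/imsetP; exists u; rewrite ?inE.
    by rewrite card_imset //; exact: crot_inj.
  rewrite -Hx; rewrite -Hx in Hw.
  have x0 : x != 0.
    apply: contra Hw => /eqP ->; apply/eqP; rewrite /wt.
    by rewrite (_ : [set i | _] = set0) ?cards0 //; apply/setP => j; rewrite !inE mxE eqxx.
  suff : (2 * h + 1 < wt x)%N by rewrite Hd; slia.
  apply: (bch (s := (n - h)%N) pgg) => // j jl.
  have Bj : g ^+ (n - h + j) \in B.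
    by apply/mB; exists j; [slia | congr (_ ^+ _); slia].
  have Hc : forall a b', a \in A -> b' \in B ->
      \sum_(i < n) map_mx (in_alg L) c 0 i * (b' * a) ^+ i = 0.
    move=> a b' Aa Bb; move/CL: Cc => Cc.
    by apply: (etrans _ (Cc _ (ABab a b' Aa Bb))); apply: eq_bigr => u _; rewrite mxE.
  have := dual_orth n0 rA rB Dv0 Hc k Bj.
  have -> : \sum_(u < n) x 0 u * g ^+ (n - h + j) ^+ u =
            \sum_(u < n) v0 0 u * map_mx (in_alg L) c 0 (crot k u) * g ^+ (n - h + j) ^+ u.
    by apply: eq_bigr => u _; rewrite !mxE.
  by [].
have dAd : (delta <= dA)%N by slia.
have lrc : is_LRC C (dA + 1 - delta) delta.
  move=> i; have [S [iS cS HS]] := loc i; exists S; split => //; slia.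
have lb : forall c, C c -> c != 0 -> (m + delta - 1 <= wt c)%N.
  move=> c Cc cn; pose c' := map_mx (in_alg L) c.
  have wc : wt c' = wt c.
    rewrite /wt; apply: eq_card => i; rewrite !inE mxE fmorph_eq0 //.
  have c'0 : c' != 0.
    apply: contra cn => /eqP H; apply/eqP; apply: (@map_mx_inj _ _ (in_alg L)).
    by rewrite -/c' H; apply/rowP => i; rewrite !mxE rmorph0.
  suff : (2 * M + 2 * h < wt c')%N by rewrite wc Hm Hd; slia.
  apply: (bch (s := (N + 1 - M - h)%N) pgg) => // j jl.
  have := AB_mid Hn Hm Hd Hineq HM pa cop jl; move=> Hz.
  move/CL: Cc => Cc.
  by apply: (etrans _ (Cc _ Hz)); apply: eq_bigr => u _; rewrite mxE.
split; first by split.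
move=> Hlt.
have kr : (dA + 1 - delta < n + 3 - m - 2 * delta)%N.
  have : dA%:Z < n%:Z - m%:Z - delta%:Z + 2 by move: Hlt; clear; lia.
  by clear -Hd Hineq Hn Hm dAd; lia.
have ub : exists2 c, C c & c != 0 /\ (wt c <= m + delta - 1)%N.
  case: hdim => G [fG HG].
  pose k := (n + 3 - m - 2 * delta)%N; pose r := (dA + 1 - delta)%N.
  have [S [_ cS HS]] := loc (Ordinal n0).
  have [S0 [S0S cS0]] := @sub_card _ S r (ltac:(rewrite cS; slia)).
  have cCS : #|~: S| = (n - dA)%N by have := cardsC S; rewrite card_ord cS; slia.
  have [E [ES cE]] := @sub_card _ (~: S) (k - 1 - r)%N (ltac:(rewrite cCS /k /r; slia)).
  pose T := S0 :|: E.
  have cT : (#|T| < k)%N by rewrite /T; have := cardsU S0 E; rewrite cS0 cE /k /r; slia.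
  pose f : 'I_#|T| -> 'I_n := enum_val.
  have [x [xn xG]] := ker_nz (colsub f G) cT.
  pose c := x *m G.
  have Cc : C c by apply/HG; exact: submxMl.
  have cn : c != 0 by rewrite /c mulmx_free_eq0.
  have cT0 : forall t, t \in T -> c 0 t = 0.
    move=> t Ht; rewrite -(enum_rankK_in Ht Ht).
    have := congr1 (fun v : 'rV_#|T| => v 0 (enum_rank_in Ht t)) xG.
    by rewrite mulmx_colsub !mxE.
  have cSz : forall t, t \in S -> c 0 t = 0.
    have : wt_on S c == 0%N.
      apply: contraT => Hw; have := HS c Cc Hw.
      suff : (wt_on S c <= #|S :\: S0|)%N.
        by rewrite cardsD (setIidPr S0S) cS cS0 /r; slia.
      apply: subset_leq_card; apply/subsetP => t; rewrite !inE => /andP [tS ct].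
      rewrite tS andbT; apply: contra ct => tS0; rewrite cT0 //.
      by rewrite /T inE tS0.
    rewrite /wt_on cards_eq0 => /eqP H t tS; apply/eqP; apply: contraT => ct.
    have : t \in [set t in S | c 0 t != 0] by rewrite !inE tS ct.
    by rewrite H inE.
  exists c => //; split => //.
  have cSE : #|S :|: E| = (dA + (k - 1 - r))%N.
    rewrite cardsU cS cE (_ : S :&: E = set0) ?cards0 ?subn0 //.
    apply/setP => t; rewrite !inE; apply/negP => /andP [tS tE].
    by have := subsetP ES t tE; rewrite inE tS.
  have : (wt c <= #|~: (S :|: E)|)%N.
    apply: subset_leq_card; apply/subsetP => t; rewrite !inE => ct.
    apply/negP => /orP [tS|tE]; move: ct; first by rewrite cSz ?eqxx.
    rewrite cT0 ?eqxx //; by rewrite /T inE tE orbT.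
  have := cardsC (S :|: E); rewrite card_ord cSE /k /r.
  by clear -Hd Hineq Hn Hm dAd kr; lia.
have md : is_min_dist C (m + delta - 1).
  split; last exact: lb.
  case: ub => c Cc [cn wc]; exists c => //; split => //.
  by apply/eqP; rewrite eqn_leq wc lb.
split => //.
rewrite /optimal_LRC_params.
have dv : ((n + 3 - m - 2 * delta + (dA + 1 - delta) - 1) %/ (dA + 1 - delta) = 2)%N.
  set r := (dA + 1 - delta)%N; set k := (n + 3 - m - 2 * delta)%N.
  have r0 : (0 < r)%N by rewrite /r; slia.
  have -> : (k + r - 1 = 2 * r + (k - r - 1))%N by rewrite /k /r; slia.
  rewrite divnMDl // divn_small //.
  rewrite /k /r; clear -Hd Hineq Hn Hm dAd dAlb kr; lia.
rewrite dv; clear -Hd Hineq Hn Hm dAd dAlb kr; lia.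
Qed.
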